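(* Let $A$ and $B$ be two $n \times n \times n$ alternating sign hypermatrices. Then $A-B$ can be expressed as a sum of T-blocks.
   Context: An $n\times n\times n$ hypermatrix $A=[a_{ijk}]$ has row lines $A_{*jk}=[a_{ijk}: i=1,\dots,n]$, column lines $A_{i*k}=[a_{ijk}: j=1,\dots,n]$ and vertical lines $A_{ij*}=[a_{ijk}: k=1,\dots,n]$. An alternating sign hypermatrix (ASHM) is an $n\times n\times n$ hypermatrix with entries in $\{0,1,-1\}$ such that in every row line, column line and vertical line the non-zero entries alternate in sign, starting and ending with $+1$. For indices $i_1<i_2$, $j_1<j_2$, $k_1<k_2$ in $\{1,\dots,n\}$, the hypermatrix $T_{i_1,j_1,k_1:\,i_2,j_2,k_2}=[t_{ijk}]$ has $t_{ijk}=1$ for $(i,j,k)\in\{(i_1,j_1,k_1),(i_2,j_2,k_1),(i_2,j_1,k_2),(i_1,j_2,k_2)\}$, $t_{ijk}=-1$ for $(i,j,k)\in\{(i_2,j_1,k_1),(i_1,j_2,k_1),(i_1,j_1,k_2),(i_2,j_2,k_2)\}$, and $t_{ijk}=0$ otherwise. A T-block is a hypermatrix of the form $T_{i_1,j_1,k_1:\,i_2,j_2,k_2}$ or $-T_{i_1,j_1,k_1:\,i_2,j_2,k_2}$. *)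

(* Defs.v *)
From mathcomp Require Import all_boot all_order all_algebra.
Set Implicit Arguments. Unset Strict Implicit. Unset Printing Implicit Defensive.
Import Order.TTheory GRing.Theory Num.Theory.
Local Open Scope ring_scope.

(* An n x n x n hypermatrix with integer entries, indexed by 'I_n (i.e. {1..n}
   shifted to {0..n-1}). *)
Definition hypermatrix (n : nat) := 'I_n -> 'I_n -> 'I_n -> int.

(* A line (sequence of entries) is alternating-sign: all entries are in
   {0,1,-1}, and its non-zero entries, read in order, are 1,-1,1,...,-1,1
   (they alternate in sign, start with +1 and end with +1). *)
Definition alt_sign_line (s : seq int) : Prop :=
  (forall x, x \in s -> x \in [:: 0; 1; -1]) /\
  let t := [seq x <- s | x != 0] in
  t = mkseq (fun i => (-1) ^+ i) (size t) /\ odd (size t).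

Definition row_line n (A : hypermatrix n) (j k : 'I_n) : seq int :=
  [seq A i j k | i <- enum 'I_n].
Definition col_line n (A : hypermatrix n) (i k : 'I_n) : seq int :=
  [seq A i j k | j <- enum 'I_n].
Definition vert_line n (A : hypermatrix n) (i j : 'I_n) : seq int :=
  [seq A i j k | k <- enum 'I_n].

Definition is_ASHM n (A : hypermatrix n) : Prop :=
  (forall i j k, A i j k \in [:: 0; 1; -1]) /\
  (forall j k, alt_sign_line (row_line A j k)) /\
  (forall i k, alt_sign_line (col_line A i k)) /\
  (forall i j, alt_sign_line (vert_line A i j)).

Definition Tmat n (i1 j1 k1 i2 j2 k2 : 'I_n) : hypermatrix n :=
  fun i j k =>
    if [|| (i == i1) && (j == j1) && (k == k1), (i == i2) && (j == j2) && (k == k1),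
           (i == i2) && (j == j1) && (k == k2) | (i == i1) && (j == j2) && (k == k2)]
    then 1
    else if [|| (i == i2) && (j == j1) && (k == k1), (i == i1) && (j == j2) && (k == k1),
                (i == i1) && (j == j1) && (k == k2) | (i == i2) && (j == j2) && (k == k2)]
    then -1 else 0.

(* A T-block datum: a sign (true = +T, false = -T) and indices
   (i1,j1,k1,i2,j2,k2). *)
Definition tblock_data n := (bool * ('I_n * 'I_n * 'I_n) * ('I_n * 'I_n * 'I_n))%type.

Definition valid_tblock n (t : tblock_data n) : bool :=
  let: (_, (i1, j1, k1), (i2, j2, k2)) := t in
  [&& (i1 < i2)%N, (j1 < j2)%N & (k1 < k2)%N].

Definition tblock n (t : tblock_data n) : hypermatrix n :=
  let: (b, (i1, j1, k1), (i2, j2, k2)) := t in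
  fun i j k => (if b then 1 else -1) * Tmat i1 j1 k1 i2 j2 k2 i j k.

Definition sum_of_tblocks n (C : hypermatrix n) : Prop :=
  exists ts : seq (tblock_data n),
    all (@valid_tblock n) ts /\
    forall i j k, C i j k = \sum_(t <- ts) tblock t i j k.

(* Main.v *)
Require Import Defs.
From mathcomp Require Import all_boot all_order all_algebra.
Import Order.TTheory GRing.Theory Num.Theory.
Local Open Scope ring_scope.

Lemma sum_alt_even (p : nat) : \sum_(0 <= i < p.*2) ((-1 : int) ^+ i) = 0.
Proof.
elim: p => [|p IH]; first by rewrite big_nil.
rewrite doubleS !big_nat_recr //= IH add0r exprS -signr_odd odd_double.
by rewrite expr0 mulr1 addrN.
Qed.

Lemma alt_line_sum (s : seq int) : alt_sign_line s -> \sum_(x <- s) x = 1.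
Proof.
move=> [_ [Ht Ho]].
have -> : \sum_(x <- s) x = \sum_(x <- [seq x <- s | x != 0]) x.
  rewrite big_filter [RHS]big_mkcond /=; apply: eq_bigr => x _.
  by case: eqP => [->|].
rewrite Ht; move: Ho; set m := size _ => Ho.
rewrite /mkseq big_map.
have -> : iota 0 m = index_iota 0 m by rewrite /index_iota subn0.
rewrite -(odd_double_half m) Ho /=.
rewrite big_nat_recr //=.
under eq_bigr do rewrite /=.
by rewrite sum_alt_even add0r -signr_odd odd_double.
Qed.

Lemma ashm_sums n (A : hypermatrix n) : is_ASHM A ->
  [/\ forall j k, \sum_i A i j k = 1, forall i k, \sum_j A i j k = 1
    & forall i j, \sum_k A i j k = 1].
Proof.
move=> [_ [hr [hc hv]]]; split.
- by move=> j k; rewrite -(@alt_line_sum _ (hr j k)) /row_line big_map big_enum.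
- by move=> i k; rewrite -(@alt_line_sum _ (hc i k)) /col_line big_map big_enum.
- by move=> i j; rewrite -(@alt_line_sum _ (hv i j)) /vert_line big_map big_enum.
Qed.

Definition dd m (a : 'I_m) (i : 'I_m.+1) : int :=
  (i == widen_ord (leqnSn m) a)%:R - (i == ord_max)%:R.
Arguments dd {m}.

Lemma dd_sum m (f : 'I_m.+1 -> int) (i : 'I_m.+1) :
  \sum_x f x = 0 -> \sum_(a < m) dd a i * f (widen_ord (leqnSn m) a) = f i.
Proof.
move=> h.
have h2 : \sum_(a < m) f (widen_ord (leqnSn m) a) = - f ord_max.
  by move: h; rewrite big_ord_recr /= => /eqP; rewrite addr_eq0 => /eqP.
have h3 : \sum_(a < m) (i == widen_ord (leqnSn m) a)%:R * f (widen_ord (leqnSn m) a)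
   = f i - (i == ord_max)%:R * f ord_max.
  have e : \sum_(x < m.+1) (i == x)%:R * f x = f i.
    under eq_bigr do rewrite mulr_natl mulrb.
    rewrite -big_mkcond (big_pred1 i) // => x; exact: eq_sym.
  by move: e; rewrite big_ord_recr /= => <-; rewrite addrK.
rewrite /dd; under eq_bigr do rewrite mulrBl.
rewrite sumrB -mulr_sumr h2 h3.
by rewrite mulrN opprK subrK.
Qed.

Lemma Tmat_dd m (a b c : 'I_m) (i j k : 'I_m.+1) :
  Tmat (widen_ord (leqnSn m) a) (widen_ord (leqnSn m) b) (widen_ord (leqnSn m) c)
       ord_max ord_max ord_max i j k = dd a i * dd b j * dd c k.
Proof.
have nx : forall (x : 'I_m) (y : 'I_m.+1),
    ~~ ((y == widen_ord (leqnSn m) x) && (y == ord_max)).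
  move=> x y; apply/negP => /andP[/eqP -> /eqP] /(congr1 val) /= h.
  by have := ltn_ord x; rewrite h ltnn.
rewrite /Tmat /dd; move: (nx a i) (nx b j) (nx c k).
case: (i == widen_ord _ a); case: (i == ord_max);
case: (j == widen_ord _ b); case: (j == ord_max);
case: (k == widen_ord _ c); case: (k == ord_max) => //=.
Qed.

Lemma iter_add (x : int) n : iter n (fun y => x + y) 0 = x *+ n.
Proof. by elim: n => //= n ->; rewrite mulrS. Qed.

Lemma sign_abs (c t : int) : (if (0 <= c)%R then 1 else -1) * t *+ `|c|%N = c * t.
Proof.
rewrite -mulr_natr natr_absz intz; case: (leP 0 c) => h.
- by rewrite (ger0_norm h) mul1r mulrC.
- by rewrite (ltr0_norm h) mulN1r mulrNN mulrC.
Qed.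

Theorem lemma2p3 (n : nat) (A B : hypermatrix n) :
  is_ASHM A -> is_ASHM B ->
  sum_of_tblocks (fun i j k => A i j k - B i j k).
Proof.
move=> hA hB.
have [rA cA vA] := ashm_sums _ _ hA.
have [rB cB vB] := ashm_sums _ _ hB.
case: n A B hA hB rA cA vA rB cB vB => [|m] A B _ _ rA cA vA rB cB vB.
  by exists [::]; split => // [[]].
set C := fun i j k => A i j k - B i j k.
have hr : forall j k, \sum_i C i j k = 0 by move=> j k; rewrite sumrB rA rB subrr.
have hc : forall i k, \sum_j C i j k = 0 by move=> i k; rewrite sumrB cA cB subrr.
have hv : forall i j, \sum_k C i j k = 0 by move=> i j; rewrite sumrB vA vB subrr.
pose w := widen_ord (leqnSn m).
exists (flatten [seq nseq `|C (w x.1.1) (w x.1.2) (w x.2)|%N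
           ((0 <= C (w x.1.1) (w x.1.2) (w x.2))%R, (w x.1.1, w x.1.2, w x.2),
            (@ord_max m, @ord_max m, @ord_max m)) | x <- enum {: 'I_m * 'I_m * 'I_m}]).
split.
  apply/allP => t /flattenP [s /mapP [x _ ->]] /nseqP [-> _] /=.
  by rewrite !ltn_ord.
move=> i j k.
rewrite big_flatten /= big_map big_enum /=.
under eq_bigr do rewrite big_nseq /= iter_add sign_abs Tmat_dd.
rewrite (eq_bigl xpredT) //.
rewrite -(pair_bigA _ (fun p c => C (w p.1) (w p.2) (w c) * (dd p.1 i * dd p.2 j * dd c k))) /=.
rewrite -(pair_bigA _ (fun a b => \sum_c C (w a) (w b) (w c) * (dd a i * dd b j * dd c k))) /=.
symmetry.
transitivity (\sum_(a < m) \sum_(b < m) dd a i * dd b j * C (w a) (w b) k).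
  apply: eq_bigr => a _; apply: eq_bigr => b _.
  rewrite -(dd_sum _ _ k (hv (w a) (w b))) mulr_sumr; apply: eq_bigr => c _.
  by rewrite mulrC -!mulrA.
transitivity (\sum_(a < m) dd a i * C (w a) j k).
  apply: eq_bigr => a _.
  rewrite -(dd_sum _ _ j (hc (w a) k)) mulr_sumr; apply: eq_bigr => b _.
  by rewrite mulrA.
by rewrite (dd_sum _ _ i (hr j k)).
Qed.
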